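(* Let $\mathbf{F}$ be a foliage tree and $X$ a topological space. (a) $\mathbf{F}$ grows into $X$ if and only if $\varnothing\notin\mathrm{Rise}_{\mathbf{F}}(X)$. (b) If $\mathbf{F}$ is a $\pi$-tree on $X$ and $p\in X$, then: (b1) the family $\{\mathrm{rise}_{\mathbf{F}}(p,U): U\text{ a neighbourhood of }p\text{ in }X\}$ has the finite intersection property; (b2) $\bigcap\{\mathrm{rise}_{\mathbf{F}}(p,U): U\text{ a neighbourhood of }p\text{ in }X\}=\varnothing$; (b3) $\mathrm{rise}_{\mathbf{F}}(p,U)$ is an infinite subset of $\omega$ for every neighbourhood $U$ of $p$ in $X$.
   Context: Neighbourhoods are not necessarily open. $\omega=\{0,1,2,\dots\}$, ${}^{<\omega}\omega$ is the set of finite sequences of natural numbers. A tree is a strict partial order in which the set of predecessors of every node is well-ordered; $\mathrm{height}(x)$ is the ordinal isomorphic to the set of predecessors of $x$; a branch is a maximal chain; $\mathrm{sons}(x)$ is the set of immediate successors of $x$; $0$ denotes the least node. A foliage tree is a pair $\mathbf{F}=(T,l)$ with $T$ a tree (skeleton) and $l$ a function on its nodes, $\mathbf{F}_x:=l(x)$; tree notions apply via the skeleton. $\mathrm{shoot}_{\mathbf{F}}(v)=\{\bigcup_{x\in C}\mathbf{F}_x: C\text{ a cofinite subset of }\mathrm{sons}_{\mathbf{F}}(v)\}$; $\mathrm{scope}_{\mathbf{F}}(p)=\{x:p\in\mathbf{F}_x\}$. For families $\gamma,\delta$ of sets, $\gamma\gg\delta$ means every nonempty $D\in\delta$ contains some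 nonempty $G\in\gamma$. $\mathrm{rise}_{\mathbf{F}}(p,U)=\{\mathrm{height}_{\mathbf{F}}(v): v\in\mathrm{scope}_{\mathbf{F}}(p)\text{ and }\mathrm{shoot}_{\mathbf{F}}(v)\gg\{U\}\}$; $\mathrm{Rise}_{\mathbf{F}}(X)=\{\mathrm{rise}_{\mathbf{F}}(p,U):p\in X,\ U\text{ a neighbourhood of }p\text{ in }X\}$. A family has the finite intersection property if every finite nonempty subfamily has nonempty intersection. $\mathbf{F}$ is locally strict if each non-maximal leaf $\mathbf{F}_x$ is the disjoint union of $\mathbf{F}_s$, $s\in\mathrm{sons}(x)$; has strict branches if it has a node and for each branch $B$, $\bigcap_{x\in B}\mathbf{F}_x$ is a singleton; is open in $X$ if all leaves are open in $X$; is a foliage $\omega,\omega$-tree if its skeleton is order-isomorphic to $({}^{<\omega}\omega,\subsetneq)$. A Baire foliage tree on $X$: open in $X$, locally strict foliage $\omega,\omega$-tree with strict branches and $\mathbf{F}_{0_{\mathbf{F}}}=X$. $\mathbf{F}$ grows into $X$ if for every $p\in X$ and neighbourhood $U$ of $p$ there is $z\in\mathrm{scope}_{\mathbf{F}}(p)$ with $\mathrm{shoot}_{\mathbf{F}}(z)\gg\{U\}$. A $\pi$-tree on $X$ is a Baire foliage tree on $X$ that grows into $X$. *)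

(* Defs.v *)
From HB Require Import structures.
From mathcomp Require Import all_boot.
From mathcomp Require Import all_classical topology.
Set Implicit Arguments.
Unset Strict Implicit.
Unset Printing Implicit Defensive.
Local Open Scope classical_set_scope.

Section Foliage.
Variable N : Type.
Variable lt : N -> N -> Prop.

Definition preds (x : N) : set N := [set y | lt y x].

Definition well_ordered_by (S : set N) : Prop :=
  (forall a b, S a -> S b -> a = b \/ lt a b \/ lt b a) /\
  (forall B, B `<=` S -> B !=set0 ->
     exists m, B m /\ forall b, B b -> b = m \/ lt m b).

Definition is_tree : Prop :=
  (forall x, ~ lt x x) /\
  (forall x y z, lt x y -> lt y z -> lt x z) /\
  (forall x, well_ordered_by (preds x)).

Definition order_iso (S S' : set N) : Prop :=
  exists f : N -> N, set_bij S S' f /\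
    forall a b, S a -> S b -> (lt a b <-> lt (f a) (f b)).

(* height(x): the order type of the predecessors of x, represented by its
   isomorphism class (of subsets of the skeleton).  Two nodes have the same
   height iff their predecessor sets are order-isomorphic. *)
Definition height (x : N) : set (set N) := [set S | order_iso S (preds x)].

(* an order type (represented as above) is a natural number, i.e. a finite
   ordinal, iff it is the order type of a finite set *)
Definition finite_ordinal (h : set (set N)) : Prop :=
  exists S, h S /\ finite_set S.

Definition sons (v : N) : set N :=
  [set w | lt v w /\ ~ (exists u, lt v u /\ lt u w)].

Definition is_least_node (r : N) : Prop := forall x, x = r \/ lt r x.

Definition chain (B : set N) : Prop :=
  forall a b, B a -> B b -> a = b \/ lt a b \/ lt b a.

Definition branch (B : set N) : Prop :=
  chain B /\ forall C, chain C -> B `<=` C -> C = B.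

Definition strict_prefix (s t : seq nat) : Prop :=
  exists u, t = s ++ u /\ u <> [::].

Definition omega_omega_skeleton : Prop :=
  exists f : N -> seq nat, bijective f /\
    forall x y, lt x y <-> strict_prefix (f x) (f y).

Variable A : Type.
Variable l : N -> set A.   (* the leaves: F_x = l x *)

Definition shoot (v : N) : set (set A) :=
  [set G | exists C, C `<=` sons v /\ finite_set (sons v `\` C) /\
                     G = \bigcup_(x in C) l x].

Definition scope (p : A) : set N := [set x | l x p].

Definition gg (gamma delta : set (set A)) : Prop :=
  forall D, delta D -> D !=set0 ->
    exists G, gamma G /\ G !=set0 /\ G `<=` D.

Definition rise (p : A) (U : set A) : set (set (set N)) :=
  height @` [set v | scope p v /\ gg (shoot v) [set U]].

Definition locally_strict : Prop :=
  forall x, (exists y, lt x y) ->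
    l x = \bigcup_(s in sons x) l s /\
    (forall s s', sons x s -> sons x s' -> s <> s' -> l s `&` l s' = set0).

Definition strict_branches : Prop :=
  (exists x : N, True) /\
  forall B, branch B -> exists q, \bigcap_(x in B) l x = [set q].

End Foliage.

(* The topological space X is represented as a subset X of a topological
   type T carrying the subspace topology (this is fully general). *)
Section InX.
Variable T : topologicalType.
Variable X : set T.

Definition nbhd_in (p : T) (U : set T) : Prop :=
  U `<=` X /\ exists V, nbhs p V /\ V `&` X `<=` U.

Definition open_in (O : set T) : Prop :=
  O `<=` X /\ forall p, O p -> nbhd_in p O.

Variable N : Type.
Variable lt : N -> N -> Prop.
Variable l : N -> set T.

Definition Rise : set (set (set (set N))) :=
  [set R | exists p U, X p /\ nbhd_in p U /\ R = rise lt l p U].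

Definition grows_into : Prop :=
  forall p U, X p -> nbhd_in p U ->
    exists z, scope l p z /\ gg (shoot lt l z) [set U].

Definition open_tree : Prop := forall x, open_in (l x).

Definition baire_tree : Prop :=
  open_tree /\ locally_strict lt l /\ omega_omega_skeleton lt /\
  strict_branches lt l /\ exists r, is_least_node lt r /\ l r = X.

Definition pi_tree : Prop := baire_tree /\ grows_into.
End InX.

Definition fip (B : Type) (Phi : set (set B)) : Prop :=
  forall S : set (set B), S `<=` Phi -> finite_set S -> S !=set0 ->
    (\bigcap_(Y in S) Y) !=set0.

(* Main.v *)
Require Import Defs.
From HB Require Import structures.
From mathcomp Require Import all_boot.
From mathcomp Require Import all_classical topology.
From mathcomp Require Import finmap zify.
Local Open Scope classical_set_scope.

Definition prefixS (s t : seq nat) := exists u, t = s ++ u.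

Lemma prefix_cmp (s t w : seq nat) : prefixS s w -> prefixS t w ->
  prefixS s t \/ prefixS t s.
Proof.
move=> [u hw] [v hw']; rewrite hw in hw' => {hw}.
elim: s t hw' => [|a s IH] [|b t] /= h.
- by left; exists [::].
- by left; exists (b :: t).
- by right; exists (a :: s).
- case: h => -> /IH [[z ->]|[z ->]]; [left|right]; by exists z.
Qed.

Lemma diverge (s t : seq nat) : ~ prefixS s t -> ~ prefixS t s ->
  exists c a b u v, a <> b /\ s = c ++ a :: u /\ t = c ++ b :: v.
Proof.
elim: s t => [|a s IH] [|b t] h1 h2.
- by exfalso; apply: h1; exists [::].
- by exfalso; apply: h1; exists (b :: t).
- by exfalso; apply: h2; exists (a :: s).
- case: (eqVneq a b) => [eab|hab].
  + subst b.
    have h1' : ~ prefixS s t by case=> w hw; apply: h1; exists w; rewrite hw.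
    have h2' : ~ prefixS t s by case=> w hw; apply: h2; exists w; rewrite hw.
    have [c [a' [b' [u [v [? [-> ->]]]]]]] := IH t h1' h2'.
    by exists (a :: c), a', b', u, v.
  + by exists [::], a, b, s, t; split => //; apply/eqP.
Qed.
Arguments diverge {s t}.

Section Tree.
Variables (T : topologicalType) (N : Type) (lt : N -> N -> Prop) (l : N -> set T).
Variables (f : N -> seq nat) (g : seq nat -> N).
Hypothesis fK : cancel f g.
Hypothesis gK : cancel g f.
Hypothesis ltE : forall x y, lt x y <-> strict_prefix (f x) (f y).
Hypothesis LS : locally_strict lt l.
Hypothesis SB : strict_branches lt l.

Lemma lt_size x y : lt x y -> size (f x) < size (f y).
Proof.
move/ltE=> [u [-> hu]]; rewrite size_cat; case: u hu => //= a u _.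
by rewrite addnS ltnS leq_addr.
Qed.

Lemma prefix_le x y u : f y = f x ++ u -> x = y \/ lt x y.
Proof.
case: u => [|a u] h.
- by left; rewrite cats0 in h; rewrite -[x]fK -h fK.
- by right; apply/ltE; exists (a :: u).
Qed.
Arguments prefix_le {x y u}.

Lemma sonsE x y : sons lt x y <-> exists a, f y = f x ++ [:: a].
Proof.
split.
- case=> /ltE [u [hy hu]] nomid.
  case: u hy hu => [|a [|b u]] hy hu //; first by exists a.
  exfalso; apply: nomid; exists (g (f x ++ [:: a])); split.
  + by apply/ltE; exists [:: a]; rewrite gK.
  + by apply/ltE; rewrite gK hy; exists (b :: u); rewrite -catA.
- case=> a hy; split; first by apply/ltE; exists [:: a].
  case=> z [/lt_size h1 /lt_size h2]; move: h2.
  by rewrite hy size_cat /= addn1 ltnS leqNgt h1.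
Qed.

Lemma son_of x a : sons lt x (g (f x ++ [:: a])).
Proof. by apply/sonsE; exists a; rewrite gK. Qed.

Lemma has_succ x : exists y, lt x y.
Proof. by exists (g (f x ++ [:: 0])); apply/ltE; exists [:: 0]; rewrite gK. Qed.

Lemma leaf_son x s : sons lt x s -> l s `<=` l x.
Proof. by move=> hs; have [-> _] := LS _ (has_succ x); move=> q hq; exists s. Qed.

Lemma leaf_mono : forall u x y, f y = f x ++ u -> l y `<=` l x.
Proof.
elim/last_ind => [|u a IH] x y hy.
- by rewrite cats0 in hy; rewrite -[y]fK hy fK.
- set y' := g (f x ++ u).
  have : sons lt y' y by apply/sonsE; exists a; rewrite /y' gK hy -cats1 catA.
  move/leaf_son => h; apply: subset_trans h _; apply: IH; by rewrite /y' gK.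
Qed.

Lemma sons_disj x s s' : sons lt x s -> sons lt x s' -> s <> s' ->
  l s `&` l s' = set0.
Proof. by have [_] := LS _ (has_succ x); apply. Qed.
Arguments sons_disj {x s s'}.

Lemma cmp_scope x y q : l x q -> l y q -> x = y \/ lt x y \/ lt y x.
Proof.
move=> hx hy.
case: (EM (prefixS (f x) (f y))) => [[u hu]|n1].
  by case: (prefix_le hu) => [->|]; auto.
case: (EM (prefixS (f y) (f x))) => [[u hu]|n2].
  by case: (prefix_le hu) => [->|]; auto.
have [c [a [b [u [v [hab [ex ey]]]]]]] := diverge n1 n2.
have sx : sons lt (g c) (g (c ++ [:: a])) by apply/sonsE; exists a; rewrite !gK.
have sy : sons lt (g c) (g (c ++ [:: b])) by apply/sonsE; exists b; rewrite !gK.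
have ne : g (c ++ [:: a]) <> g (c ++ [:: b]).
  move/(congr1 f); rewrite !gK => /(congr1 (fun s => nth 0 s (size c))).
  by rewrite !nth_cat ltnn subnn /=.
have lx : l x `<=` l (g (c ++ [:: a])).
  by apply: (leaf_mono u); rewrite gK ex -catA.
have ly : l y `<=` l (g (c ++ [:: b])).
  by apply: (leaf_mono v); rewrite gK ey -catA.
have : (l (g (c ++ [:: a])) `&` l (g (c ++ [:: b]))) q by split; [apply: lx|apply: ly].
by rewrite (sons_disj sx sy ne).
Qed.
Arguments cmp_scope {x y q}.

Lemma pre_cmp a b : prefixS (f a) (f b) \/ prefixS (f b) (f a) ->
  a = b \/ lt a b \/ lt b a.
Proof.
case=> [[u hu]|[u hu]]; case: (prefix_le hu) => [->|]; auto.
Qed.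

Lemma leaf_nonempty x : l x !=set0.
Proof.
pose B := [set y | exists k, prefixS (f y) (f x ++ nseq k 0)].
have chB : chain lt B.
  move=> a b [ka [ua ha]] [kb [ub hb]]; apply: pre_cmp.
  apply: (@prefix_cmp _ _ (f x ++ nseq (ka + kb) 0)).
  + by exists (ua ++ nseq kb 0); rewrite nseqD catA ha catA.
  + by exists (ub ++ nseq ka 0); rewrite addnC nseqD catA hb catA.
have brB : branch lt B.
  split => // C chC BC; apply/seteqP; split => // c Cc.
  set y := g (f x ++ nseq (size (f c)) 0).
  have By : B y by exists (size (f c)); exists [::]; rewrite /y gK cats0.
  case: (chC c y Cc (BC _ By)) => [->//|[/ltE [u [hu _]]|/lt_size]].
  + by exists (size (f c)); exists u; rewrite -hu /y gK.
  + by rewrite /y gK size_cat size_nseq ltnNge leq_addl.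
have [_ hsb] := SB; have [q hq] := hsb B brB.
exists q; have : (\bigcap_(y in B) l y) q by rewrite hq.
by apply; exists 0; exists [::]; rewrite !cats0.
Qed.

Lemma sons_infinite w : infinite_set (sons lt w).
Proof.
move=> hfin; apply: infinite_nat.
have h : (fun a => g (f w ++ [:: a])) @` setT `<=` sons lt w.
  by move=> _ [a _ <-]; apply: son_of.
have inj : {in setT &, injective (fun a => g (f w ++ [:: a]))}.
  move=> a b _ _ /(congr1 f); rewrite !gK => /(congr1 (fun s => nth 0 s (size (f w)))).
  by rewrite !nth_cat ltnn subnn.
have [n hn] := sub_finite_set h hfin.
exists n; apply: card_eq_trans hn; rewrite card_eq_sym; exact: inj_card_eq inj.
Qed.

Lemma no_shoot w y U : lt w y -> U !=set0 -> U `<=` l y ->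
  gg (shoot lt l w) [set U] -> False.
Proof.
move=> hwy hU hUy hgg.
have [G [[C [hC [hfin eG]]] [_ hGU]]] := hgg U erefl hU.
move: (hwy) => /ltE [u [hy hu]]; case: u hy hu => [//|a u] hy _.
set s := g (f w ++ [:: a]).
have ss : sons lt w s by apply: son_of.
have hys : l y `<=` l s by apply: (leaf_mono u); rewrite /s gK hy -catA.
have [x [Cx xs]] : exists x, C x /\ x <> s.
  apply: contrapT => hn; apply: (sons_infinite w).
  apply: (@sub_finite_set _ _ ((sons lt w `\` C) `|` [set s])).
    move=> x hx; case: (EM (C x)) => hCx; [right|left; by split].
    by apply: contrapT => hxs; apply: hn; exists x.
  by rewrite finite_setU; split => //; apply: finite_set1.
have [q hq] := leaf_nonempty x.
have : (l x `&` l s) q.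
  split => //; apply: hys; apply: hUy; apply: hGU; rewrite eG; by exists x.
by rewrite (sons_disj (hC _ Cx) ss xs).
Qed.
Arguments no_shoot {w y U}.

Lemma preds_bij x : set_bij (preds lt x) `I_(size (f x)) (fun u => size (f u)).
Proof.
split.
- by move=> u /lt_size.
- move=> u v /set_mem /ltE [a [ha _]] /set_mem /ltE [b [hb _]] e.
  have eu : take (size (f u)) (f x) = f u by rewrite ha take_size_cat.
  have ev : take (size (f v)) (f x) = f v by rewrite hb take_size_cat.
  by rewrite -[u]fK -[v]fK -eu -ev e.
- move=> k /= hk; exists (g (take k (f x))); last by rewrite gK size_take hk.
  apply/ltE; rewrite gK; exists (drop k (f x)); split; first by rewrite cat_take_drop.
  by move/(congr1 size); rewrite size_drop /= => /eqP; rewrite subn_eq0 leqNgt hk.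
Qed.

Lemma preds_card x : (preds lt x #= `I_(size (f x)))%card.
Proof. by apply/card_set_bijP; exists (fun u => size (f u)); apply: preds_bij. Qed.

Lemma iso_refl S : order_iso lt S S.
Proof.
exists id; split => //; split.
- by move=> ?.
- by move=> ? ? _ _.
- by move=> a ha; exists a.
Qed.

Lemma height_size v w : height lt v = height lt w -> size (f v) = size (f w).
Proof.
move=> e; have : height lt w (preds lt v) by rewrite -e; apply: iso_refl.
case=> h [hb _].
have c1 : (preds lt v #= `I_(size (f w)))%card.
  by apply/card_set_bijP; exists ((fun u => size (f u)) \o h); apply: set_bij_comp hb (preds_bij w).
apply/card_eq_II; apply: card_eq_trans c1; rewrite card_eq_sym; exact: preds_card.
Qed.
Arguments height_size {v w}.

Lemma height_fin v : finite_ordinal (height lt v).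
Proof. by exists (preds lt v); split; [apply: iso_refl|exists (size (f v)); apply: preds_card]. Qed.

Lemma deep r q : l r q -> forall n, exists y, l y q /\ n <= size (f y).
Proof.
move=> hr; elim=> [|n [y [hy hn]]]; first by exists r.
have [e _] := LS _ (has_succ y); rewrite e in hy; case: hy => s ss hs.
exists s; split => //; move: ss => /sonsE [a ->]; rewrite size_cat /=; lia.
Qed.

End Tree.

Theorem lemma8 (T : topologicalType) (X : set T) (N : Type)
    (lt : N -> N -> Prop) (l : N -> set T) :
  is_tree lt ->
  (grows_into X lt l <-> ~ Rise X lt l set0) /\
  (pi_tree X lt l -> forall p, X p ->
     fip [set rise lt l p U | U in nbhd_in X p] /\
     \bigcap_(U in nbhd_in X p) rise lt l p U = set0 /\
     (forall U, nbhd_in X p U ->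
        infinite_set (rise lt l p U) /\
        rise lt l p U `<=` @finite_ordinal N)).
Proof.
move=> _; split.
  split.
  - move=> hg [p [U [Xp [hU e]]]]; have [z [sz gz]] := hg p U Xp hU.
    have : rise lt l p U (height lt z) by exists z.
    by rewrite -e.
  - move=> hn p U Xp hU; apply: contrapT => hz; apply: hn.
    exists p, U; split => //; split => //.
    apply/seteqP; split => // h [z [sz gz] _]; apply: hz; by exists z.
move=> [[hopen [hLS [[f [hbij hf]] [hSB [r [hr hrX]]]]]] hgrow] p Xp.
case: hbij => g fK gK.
have deepL := @deep _ _ _ _ _ _ gK hf hLS.
have cmpS := @cmp_scope _ _ _ _ _ _ fK gK hf hLS.
have noS := @no_shoot _ _ _ _ _ _ fK gK hf hLS hSB.
have hsz := @height_size _ _ _ _ fK gK hf.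
have succ := @has_succ _ _ _ _ gK hf.
have ltS := @lt_size _ _ _ hf.
have hfinL := @height_fin _ _ _ _ fK gK hf.
have nbhd_p : forall U, nbhd_in X p U -> U p.
  move=> U [UX [V [hV hVU]]]; apply: hVU; split => //; exact: nbhs_singleton hV.
have mono : forall z U U', U `<=` U' -> U !=set0 ->
    gg (shoot lt l z) [set U] -> gg (shoot lt l z) [set U'].
  move=> z U U' h hU hg D -> _; have [G [sG [nG GU]]] := hg U erefl hU.
  by exists G; split => //; split => //; apply: subset_trans GU h.
have nbhd_open : forall O, open_in X O -> O p -> nbhd_in X p O.
  by move=> O [_ h] Op; apply: h.
have nbhdI : forall U U', nbhd_in X p U -> nbhd_in X p U' -> nbhd_in X p (U `&` U').
  move=> U U' [UX [V [hV hVU]]] [_ [V' [hV' hVU']]]; split.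
    by move=> x [/UX].
  exists (V `&` V'); split; first exact: filterI.
  by move=> x [[a b] c]; split; [apply: hVU|apply: hVU']; split.
have nbhdX : nbhd_in X p X.
  split => //; exists setT; split; [exact: filterT|by move=> x []].
have hrp : l r p by rewrite hrX.
have E : forall U, nbhd_in X p U -> forall n, exists z,
    (scope l p z /\ gg (shoot lt l z) [set U]) /\ n <= size (f z).
  move=> U hU n; have [y [hy hn]] := deepL _ _ hrp n.
  have hU' : nbhd_in X p (U `&` l y) by apply: nbhdI => //; apply: nbhd_open.
  have [z [sz gz]] := hgrow p _ Xp hU'.
  have Up' := nbhd_p _ hU'.
  case: (cmpS _ _ _ sz hy) => [ezy|[hzy|hyz]].
  - exists z; split; last by rewrite ezy.
    split => //; apply: (mono _ _ _ _ _ gz); [by move=> x []|by exists p].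
  - exfalso; apply: (noS _ _ _ hzy _ _ gz); first by exists p.
    by move=> x [].
  - exists z; split.
      split => //; apply: (mono _ _ _ _ _ gz); [by move=> x []|by exists p].
    have := ltS _ _ hyz; lia.
split.
  move=> S hS hfin hne.
  have [Xs eXs] := finite_fsetP.1 hfin; subst S.
  have key : forall s : seq (set (set (set N))),
      (forall Y : set (set (set N)), Y \in s -> [set rise lt l p U | U in nbhd_in X p] Y) ->
      exists U, nbhd_in X p U /\ forall Y : set (set (set N)), Y \in s -> rise lt l p U `<=` Y.
    elim=> [|Y s IH] hs; first by exists X; split.
    have [U1 hU1 e1] := hs Y (mem_head _ _).
    have [U2 [hU2 h2]] := IH (fun Z hZ => hs Z ltac:(by rewrite in_cons hZ orbT)).
    exists (U1 `&` U2); split; first exact: nbhdI.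
    move=> Z; rewrite in_cons => /orP [/eqP ->|hZ].
    + rewrite -e1 => _ [z [sz gz] <-]; exists z => //; split => //.
      apply: (mono _ _ _ _ _ gz); [by move=> x []|by exists p; apply: nbhd_p; apply: nbhdI].
    + move=> _ [z [sz gz] <-]; apply: (h2 Z hZ); exists z => //; split => //.
      apply: (mono _ _ _ _ _ gz); [by move=> x []|by exists p; apply: nbhd_p; apply: nbhdI].
  have [U [hU hsub]] := key Xs (fun Y hY => hS Y hY).
  have [z [sz gz]] := hgrow p U Xp hU.
  exists (height lt z) => Y hY; apply: (hsub Y hY); by exists z.
split.
  apply/seteqP; split => // h hall.
  have [w0 [sw0 _] e0] := hall X nbhdX.
  have [e _] := hLS _ (succ w0).
  have : l w0 p := sw0; rewrite e => -[y ys hy].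
  have hU : nbhd_in X p (l y) by apply: nbhd_open.
  have [w [sw gw] ew] := hall _ hU.
  have hs := hsz _ _ (etrans ew (esym e0)).
  have lt0 : lt w0 y := ys.1.
  have := ltS _ _ lt0.
  case: (cmpS _ _ _ sw hy) => [ewy|[hwy|hyw]].
  - by rewrite -ewy; lia.
  - by exfalso; apply: (noS _ _ _ hwy _ _ gw); [exists p|].
  - have := ltS _ _ hyw; lia.
move=> U hU; split; last by move=> _ [z _ <-]; apply: hfinL.
have [c hc] := choice (E U hU).
pose d := fix d k := if k is k'.+1 then c (size (f (d k'))).+1 else c 0.
have dS : forall k, size (f (d k)) < size (f (d k.+1)).
  by move=> k; have [_ ] := hc (size (f (d k))).+1.
have dinc : forall k m, size (f (d k)) < size (f (d (k + m).+1)).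
  move=> k; elim=> [|m IH]; first by rewrite addn0.
  apply: (ltn_trans IH); rewrite addnS; exact: dS.
have inj : {in setT &, injective (fun k => height lt (d k))}.
  move=> k k' _ _ /(hsz _ _) e.
  case: (ltngtP k k') => // hkk.
  - have := dinc k (k' - k).-1.
    have -> : (k + (k' - k).-1).+1 = k' by lia.
    by rewrite e ltnn.
  - have := dinc k' (k - k').-1.
    have -> : (k' + (k - k').-1).+1 = k by lia.
    by rewrite e ltnn.
apply/infiniteP.
have c1 : ([set: nat] #= (fun k => height lt (d k)) @` setT)%card.
  by rewrite card_eq_sym; apply: inj_card_eq.
apply: (@card_le_trans _ _ _ ((fun k => height lt (d k)) @` setT)).

  by move: c1; rewrite card_eq_le => /andP [].
apply: subset_card_le => _ [k _ <-].
exists (d k) => //; case: k => [|k]; [exact: (hc 0).1|exact: (hc _).1].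
Qed.
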